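(* Let $n_r, n_d \ge 0$ and $n_c \ge 1$ be integers, let $m_1,\dots,m_{n_c}$ be positive integers, and set $\hat{m}_0=0$, $\hat{m}_h=\sum_{j=1}^h m_j$, and $n = n_r+n_d+\hat{m}_{n_c}$. Let $x^1,\dots,x^k\in\mathbb{R}^n$ be points satisfying, for every $i=1,\dots,k$ and every $h=1,\dots,n_c$, $x^i_{n_r+n_d+j}\in\{0,1\}$ for $j=\hat{m}_{h-1}+1,\dots,\hat{m}_h$ and $\sum_{j=\hat{m}_{h-1}+1}^{\hat{m}_h} x^i_{n_r+n_d+j} = 1$. Let $\phi:\mathbb{R}_+\to\mathbb{R}$ be any function, $\Phi = (\phi(\|x^i-x^j\|))_{i,j=1,\dots,k}$ (Euclidean norm), let $F\in\mathbb{R}^k$, and let $P$ be the $k\times(n+1)$ matrix whose $i$-th row is $((x^i)^\top, 1)$. Let $\hat{P}$ be the $k\times(n+1-n_c)$ matrix obtained from $P$ by deleting the columns corresponding to the coordinates $x_{n_r+n_d+\hat{m}_h}$ for $h=1,\dots,n_c$. If the system $$\begin{pmatrix}\Phi & P\\ P^\top & 0_{(n+1)\times(n+1)}\end{pmatrix}\begin{pmatrix}\lambda\\ \alpha\end{pmatrix} = \begin{pmatrix}F\\ 0_{n+1}\end{pmatrix}$$ has a solution $(\lambda,\alpha)\in\mathbb{R}^k\times\mathbb{R}^{n+1}$, then the system $$\begin{pmatrix}\Phi & \hat{P}\\ \hat{P}^\top & 0_{(n+1-n_c)\times(n+1-n_c)}\end{pmatrix}\begin{pmatrix}\lambda\\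 \alpha\end{pmatrix} = \begin{pmatrix}F\\ 0_{n+1-n_c}\end{pmatrix}$$ has a solution $(\lambda,\alpha)\in\mathbb{R}^k\times\mathbb{R}^{n+1-n_c}$.
   Context: This is the setting of radial basis function interpolation with a polynomial tail of degree $d=1$ (e.g. cubic $\phi(r)=r^3$ or thin plate spline $\phi(r)=r^2\log r$), where the interpolant is $s(x)=\sum_i\lambda_i\phi(\|x-x^i\|)+\alpha^\top(x,1)$ and $F$ is the vector of function values at the interpolation points. The last $\hat{m}_{n_c}$ coordinates are the unary (one-hot) encodings of $n_c$ categorical variables, the $h$-th having $m_h$ possible values. *)

(* Defs.v *)
From HB Require Import structures.
From mathcomp Require Import all_boot all_order all_algebra.
From mathcomp Require Import reals.
Set Implicit Arguments. Unset Strict Implicit. Unset Printing Implicit Defensive.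
Import Order.TTheory GRing.Theory Num.Theory.
Local Open Scope ring_scope.

(* \hat m_h = m_1 + ... + m_h  (1-based indexing of m; \hat m_0 = 0) *)
Definition mhat (m : nat -> nat) (h : nat) : nat := (\sum_(1 <= j < h.+1) m j)%N.

Definition eucl_norm (R : rcfType) (n : nat) (v : 'rV[R]_n) : R :=
  Num.sqrt (\sum_(l < n) v 0 l ^+ 2).

Definition Phi_mat (R : rcfType) (k n : nat) (phi : R -> R)
  (x : 'I_k -> 'rV[R]_n) : 'M[R]_k :=
  \matrix_(i, j) phi (eucl_norm (x i - x j)).

Definition P_mat (R : rcfType) (k n : nat) (x : 'I_k -> 'rV[R]_n) : 'M[R]_(k, n + 1) :=
  row_mx (\matrix_(i, l) x i 0 l) (const_mx 1).

(* Column c (0-based) of P is deleted iff it corresponds to the coordinate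
   x_{nr+nd+\hat m_h} (1-based) for some h = 1..nc, i.e. c = nr+nd+\hat m_h - 1. *)
Definition deleted_col (nr nd nc : nat) (m : nat -> nat) (N : nat) (c : 'I_N) : bool :=
  [exists h : 'I_nc, nat_of_ord c == (nr + nd + mhat m h.+1 - 1)%N].

Definition kept_cols (nr nd nc : nat) (m : nat -> nat) (N : nat) : pred 'I_N :=
  fun c => ~~ deleted_col nr nd nc m c.

Definition Phat_mat (R : rcfType) (nr nd nc : nat) (m : nat -> nat) (k N : nat)
  (P : 'M[R]_(k, N)) : 'M[R]_(k, #|@kept_cols nr nd nc m N|) :=
  colsub (fun j => @enum_val _ (@kept_cols nr nd nc m N) j) P.

Definition rbf_solvable (R : rcfType) (k p : nat) (Phi : 'M[R]_k) (Q : 'M[R]_(k, p))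
  (F : 'cV[R]_k) : Prop :=
  exists (lam : 'cV[R]_k) (alpha : 'cV[R]_p),
    block_mx Phi Q Q^T 0 *m col_mx lam alpha = col_mx F 0.

(* Main.v *)
Require Import Defs.
From HB Require Import structures.
From mathcomp Require Import all_boot all_order all_algebra.
From mathcomp Require Import reals zify.
Import Order.TTheory GRing.Theory Num.Theory.
Local Open Scope ring_scope.
Lemma mhatS m h : mhat m h.+1 = (mhat m h + m h.+1)%N.
Proof. by rewrite /mhat big_nat_recr. Qed.
Lemma mhat_mono m a b : (a <= b)%N -> (mhat m a <= mhat m b)%N.
Proof. elim: b => [|b IH]; first by rewrite leqn0 => /eqP->.
rewrite leq_eqVlt => /orP[/eqP->//|]; rewrite ltnS => /IH; rewrite mhatS => h.
exact: leq_trans h (leq_addr _ _). Qed.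

Theorem proposition2 (R : realType) (nr nd nc : nat) (m : nat -> nat) (k : nat)
  (x : 'I_k -> 'rV[R]_(nr + nd + mhat m nc)) (phi : R -> R) (F : 'cV[R]_k) :
  (0 < nc)%N ->
  (forall h : nat, (1 <= h <= nc)%N -> (0 < m h)%N) ->
  (forall (i : 'I_k) (h : nat), (1 <= h <= nc)%N ->
     (forall l : 'I_(nr + nd + mhat m nc),
        (nr + nd + mhat m h.-1 <= l < nr + nd + mhat m h)%N ->
        x i 0 l = 0 \/ x i 0 l = 1) /\
     \sum_(l < nr + nd + mhat m nc | (nr + nd + mhat m h.-1 <= l < nr + nd + mhat m h)%N)
        x i 0 l = 1) ->
  rbf_solvable (Phi_mat phi x) (P_mat x) F ->
  rbf_solvable (Phi_mat phi x) (Phat_mat nr nd nc m (P_mat x)) F.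
Proof.
move=> nc0 mpos Hx sol.
set n := (nr + nd + mhat m nc)%N.
set P := P_mat x.
set K := @kept_cols nr nd nc m (n + 1)%N.
set Ph := Phat_mat nr nd nc m P.
have Pl : forall i l, P i (lshift 1 l) = x i 0 l by move=> i l; rewrite /P /P_mat row_mxEl mxE.
have Pr : forall i, P i (rshift n (0:'I_1)) = 1 by move=> i; rewrite /P /P_mat row_mxEr mxE.
rewrite -/P in sol; clearbody P.
have keptsub : forall j, j \in K -> (row j P^T <= Ph^T)%MS.
  move=> j kj; apply: (eq_row_sub (enum_rank_in kj j)); apply/rowP => i.
  by rewrite !mxE enum_rankK_in.
have sub : (P^T <= Ph^T)%MS.
  apply/row_subP => j.
  case kj: (j \in K); first exact: keptsub.
  move: kj; rewrite /K unfold_in /kept_cols => /negbFE/existsP[h /eqP hj].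
  have mh1 : (0 < m h.+1)%N by apply: mpos; rewrite ltn_ord.
  have mh1' := mhatS m h.
  have mhn : (mhat m h.+1 <= mhat m nc)%N by apply: mhat_mono; rewrite ltn_ord.
  have jn : (j < n)%N by rewrite hj /n; lia.
  set j' : 'I_n := Ordinal jn.
  have ->: j = lshift 1 j' by apply: val_inj.
  set B := fun l : 'I_n => (nr + nd + mhat m h <= l < nr + nd + mhat m h.+1)%N.
  have Bj' : B j' by rewrite /B /= hj; lia.
  have E : row (lshift 1 j') P^T = row (rshift n (0:'I_1)) P^T
      - \sum_(l < n | B l && (l != j')) row (lshift 1 l) P^T.
    apply/rowP => i; rewrite !mxE summxE.
    have [_ Hs] := Hx i h.+1 ltac:(rewrite ltn_ord; done).
    rewrite (bigD1 j') //= in Hs.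
    rewrite Pl Pr -Hs.
    rewrite [X in _ - X](eq_bigr (fun l => x i 0 l)); last by move=> l _; rewrite !mxE Pl.
    by rewrite addrK.
  rewrite E; apply: addmx_sub; first apply: keptsub.
    rewrite /K unfold_in /kept_cols; apply/existsP => -[h' /eqP] /=.
    have mh'1 : (0 < m h'.+1)%N by apply: mpos; rewrite ltn_ord.
    have := mhatS m h'.
    have : (mhat m h'.+1 <= mhat m nc)%N by apply: mhat_mono; rewrite ltn_ord.
    rewrite /n; lia.
  rewrite -scaleN1r; apply: scalemx_sub; apply: summx_sub => l /andP[Bl nl].
  apply: keptsub; rewrite /K unfold_in /kept_cols; apply/existsP => -[h' /eqP] /=.
  move: Bl nl; rewrite /B => Bl /eqP nl.
  have mh'1 : (0 < m h'.+1)%N by apply: mpos; rewrite ltn_ord.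
  have := mhatS m h'.
  case: (ltngtP h' h) => [hh|hh|/val_inj ->].
  - have : (mhat m h'.+1 <= mhat m h)%N by apply: mhat_mono.
    lia.
  - have mh2 : (0 < m h.+2)%N by apply: mpos; have := ltn_ord h'; lia.
    have := mhatS m h.+1.
    have : (mhat m h.+2 <= mhat m h'.+1)%N by apply: mhat_mono.
    lia.
  - move=> _ e; apply: nl; apply: val_inj; rewrite /= e hj //.
case: sol => lam [alpha]; rewrite mul_block_col => /eq_col_mx [e1 e2].
case/submxP: sub => D hD.
have hP : P = Ph *m D^T by rewrite -(trmxK P) hD trmx_mul trmxK.
have hPh : Ph^T = rowsub (fun j => @enum_val _ K j) P^T by apply/matrixP => i j; rewrite !mxE.
exists lam, (D^T *m alpha).
rewrite mul_block_col mul0mx addr0 mulmxA -hP e1 hPh mul_rowsub_mx.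
by move: e2; rewrite mul0mx addr0 => ->; rewrite (_ : rowsub _ 0 = 0) //; apply/matrixP => i j; rewrite !mxE.
Qed.
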